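(* There exist absolute constants $\lambda,C>0$ with the following property. Let $t\ge 1$, let $w_1,\dots,w_t>0$ be fixed weights, and let $W=\sum_{i=1}^t w_i$. Fix $\ell\in[t]$ and assume $w_i\le\frac{1}{2\ell}W$ for all $i\in[t]$. Let $t_1,\dots,t_t$ be i.i.d. exponential random variables with rate $1$, and set $v_i=w_i/t_i$. Let $D(1),\dots,D(t)$ be the anti-ranks, i.e. the random indices with $v_{D(1)}\ge v_{D(2)}\ge\dots\ge v_{D(t)}$. Then for every $c\ge 1/2$, $$\Pr\!\left[v_{D(\ell)}\le\frac{W}{c\,\ell}\right]\le\lambda e^{-Cc}.$$
   Context: An exponential random variable with rate $1$ has density $e^{-x}$ for $x\ge 0$. The anti-ranks are almost surely uniquely defined. *)

(* Defs.v *)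
From HB Require Import structures.
From mathcomp Require Import all_boot all_order all_algebra.
From mathcomp Require Import all_classical all_reals all_analysis.
Set Implicit Arguments. Unset Strict Implicit. Unset Printing Implicit Defensive.
Import Order.TTheory GRing.Theory Num.Theory.
Local Open Scope classical_set_scope.
Local Open Scope ring_scope.

(* Mutual independence of a finite family of real random variables:
   the product rule for every choice of Borel sets (taking B i = setT
   recovers every subfamily). *)
Definition mutually_independent d (T : measurableType d) (R : realType)
    (P : probability T R) (t : nat) (X : 'I_t -> {RV P >-> R}) : Prop :=
  forall B : 'I_t -> set R, (forall i, measurable (B i)) ->
    P (\bigcap_(i in [set: 'I_t]) (X i @^-1` B i)) =
    (\prod_(i < t) P (X i @^-1` B i))%E.

Definition is_exponential1 d (T : measurableType d) (R : realType)
    (P : probability T R) (X : {RV P >-> R}) : Prop :=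
  forall A : set R, measurable A -> distribution P X A = exponential_prob 1 A.

(* k-th largest value (k >= 1) of v : 'I_t -> R, i.e. v_{D(k)} where D are
   the anti-ranks: the (k-1)-th entry of the values sorted non-increasingly. *)
Definition kth_largest (R : realType) (t : nat) (v : 'I_t -> R) (k : nat) : R :=
  nth 0 (sort (fun x y : R => y <= x) [seq v i | i <- enum 'I_t]) k.-1.

(* Main.v *)
Require Import Defs.
From HB Require Import structures.
From mathcomp Require Import all_boot all_order all_algebra.
From mathcomp Require Import all_classical all_reals all_analysis.
From mathcomp Require Import ring lra.
Import Order.TTheory GRing.Theory Num.Theory.
Local Open Scope classical_set_scope.
Local Open Scope ring_scope.
Lemma sorted_count (R : realType) (s : seq R) (a : R) k :
  sorted (fun x y => y <= x) s -> (k < size s)%N ->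
  (a < nth 0 s k) = (k < count (fun x => (a < x)%R) s)%N.
Proof.
have tr : transitive (fun x y : R => y <= x).
  by move=> x y z h1 h2; exact: le_trans h2 h1.
elim: s k => [//|y s IH] k /= hs hk.
have hs' := path_sorted hs.
have hall := order_path_min tr hs.
have c0 : y <= a -> count (fun x => (a < x)%R) s = 0%N.
  move=> ay; apply/eqP; rewrite eqn0Ngt -has_count; apply/hasPn => z zs.
  by rewrite -leNgt; exact: le_trans (allP hall z zs) ay.
case: k hk => [_|k hk] /=.
  case: (ltP a y) => ay //=.
  by rewrite c0.
rewrite IH //.
case: (ltP a y) => ay /=; first by rewrite add1n ltnS.
rewrite c0 // add0n ltn0; apply/negbTE; rewrite -leNgt; idtac.
Qed.

Lemma kth_count (R : realType) (t : nat) (v : 'I_t -> R) (l : nat) (a : R) :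
  (1 <= l <= t)%N ->
  (kth_largest v l <= a) = (count (fun i => (a < v i)%R) (enum 'I_t) <= l.-1)%N.
Proof.
move=> /andP[l1 lt].
rewrite /kth_largest leNgt sorted_count ?sort_sorted //.
- by rewrite count_sort count_map -leqNgt.
- by move=> x y; apply: le_total.
- rewrite size_sort size_map size_enum_ord. case: l l1 lt => //.
Qed.
Lemma prod_if_count (R : realType) (t : nat) (f : 'I_t -> bool) (q : R) :
  \prod_(i < t) (if f i then q else 1) = q ^+ count f (enum 'I_t).
Proof.
rewrite -big_enum /=.
elim: (enum 'I_t) => [|i s IH]; first by rewrite big_nil expr0.
by rewrite big_cons IH /=; case: (f i); rewrite ?exprS ?mul1r ?add0n.
Qed.

Lemma alg_bound (R : realType) (t k : nat) (g : 'I_t -> bool -> R) (q : R) :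
  (forall i b, 0 <= g i b) -> 0 < q <= 1 ->
  \sum_(f : {ffun 'I_t -> bool} | (count f (enum 'I_t) <= k)%N)
     \prod_(i < t) g i (f i)
  <= (q ^+ k)^-1 * \prod_(i < t) (g i false + q * g i true).
Proof.
move=> g0 /andP[q0 q1].
have qk0 : 0 < q ^+ k by rewrite exprn_gt0.
pose G i b := (if b then q else 1) * g i b.
have -> : \prod_(i < t) (g i false + q * g i true) =
          \sum_(f : {ffun 'I_t -> bool}) \prod_(i < t) G i (f i).
  rewrite (eq_bigr (fun i => \sum_(b : bool) G i b)); last first.
    by move=> i _; rewrite big_bool /= /G mul1r addrC.
  by rewrite bigA_distr_bigA.
rewrite mulr_sumr.
apply: le_trans (_ : \sum_(f : {ffun 'I_t -> bool} | (count f (enum 'I_t) <= k)%N)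
   ((q ^+ k)^-1 * \prod_(i < t) G i (f i)) <= _).
  apply: ler_sum => f hf.
  rewrite /G big_split /= prod_if_count mulrA.
  rewrite -[X in X <= _]mul1r; apply: ler_wpM2r.
    by apply: prodr_ge0 => i _; exact: g0.
  rewrite ler_pdivlMl // mulr1.
  rewrite -(subnKC hf) exprD. apply: ler_piMr. by rewrite exprn_ge0 // ltW.
  by rewrite exprn_ile1 // ltW.
rewrite [leRHS](bigID (fun f : {ffun 'I_t -> bool} => (count f (enum 'I_t) <= k)%N)) /=.
rewrite lerDl; apply: sumr_ge0 => f _; apply: mulr_ge0; first by rewrite invr_ge0 ltW.
apply: prodr_ge0 => i _; rewrite /G; apply: mulr_ge0 => //.
by case: (f i) => //; rewrite ltW.
Qed.

Lemma expR_conv (R : realType) (th a b : R) : 0 <= th -> th <= 1 ->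
  expR (th * a + (1 - th) * b) <= th * expR a + (1 - th) * expR b.
Proof.
move=> h0 h1.
have := @convex_expR R (Itv01 h0 h1) a b.
by rewrite !convRE /=.
Qed.

Lemma holder_step (R : realType) (A B y th : R) :
  0 < A -> 0 < B -> A + B = 1 -> 0 <= th -> th <= 1 ->
  A * expR (- (th * y)) + B <= expR (th * ln (A * expR (- y) + B)).
Proof.
move=> A0 B0 AB h0 h1.
set U := A * expR (- y) + B.
have U0 : 0 < U by rewrite addr_gt0 // mulr_gt0 // expR_gt0.
have eU : expR (ln U) = U by rewrite lnK // posrE.
have eA : expR (ln A) = A by rewrite lnK // posrE.
have eB : expR (ln B) = B by rewrite lnK // posrE.
set L := ln U.
have t1 : A * expR (- (th * y)) <=
    expR (th * L) * (th * (A * expR (- y) / U) + (1 - th) * A).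
  have -> : A * expR (- (th * y)) = expR (th * L) *
      expR (th * (ln A - y - L) + (1 - th) * ln A).
    rewrite -expRD -[in LHS]eA -expRD; congr expR; ring.
  apply: ler_wpM2l; first exact: expR_ge0.
  apply: le_trans; first exact: expR_conv.
  rewrite eA expRB expRD eA eU; exact: lexx.
have t2 : B <= expR (th * L) * (th * (B / U) + (1 - th) * B).
  have eB2 : B = expR (th * L) * expR (th * (ln B - L) + (1 - th) * ln B).
    rewrite -expRD -[in LHS]eB; congr expR; ring.
  rewrite [X in X <= _]eB2.
  apply: ler_wpM2l; first exact: expR_ge0.
  apply: le_trans; first exact: expR_conv.
  rewrite eB expRB eB eU; exact: lexx.
apply: le_trans (lerD t1 t2) _.
rewrite -mulrDr; apply: ler_piMr; first exact: expR_ge0.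
have -> : th * (A * expR (- y) / U) + (1 - th) * A + (th * (B / U) + (1 - th) * B)
   = th * (U / U) + (1 - th) * (A + B) by rewrite /U; field; rewrite gt_eqF.
by rewrite divff ?gt_eqF // AB !mulr1 subrKC.
Qed.

Lemma expo_itv (R : realType) (x : R) : 0 < x ->
  exponential_prob (1:R) `]0, x[%classic = (1 - expR (- x))%:E.
Proof.
move=> x0.
have h := @exponential_prob_itv0c R 1 x x0.
rewrite mulN1r in h.
set mu := exponential_prob (1:R).
have h01 : (mu [set 0%R; x] = 0)%E.
  apply/eqP; rewrite eq_le; apply/andP; split; last exact: measure_ge0.
  apply: le_trans (measureU2 _ _ _) _ => //.
  rewrite (_ : _ [set 0%R] = 0%E); last exact: integral_set1.
  rewrite (_ : _ [set x] = 0%E); last exact: integral_set1.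
  by rewrite adde0.
rewrite EFinB -h -(setUitv_set2 false true (ltW x0)).
rewrite measureU //=.
- by rewrite (_ : exponential_prob 1 [set 0%R; x] = 0%E) ?adde0.
- by apply: measurableU; exact: measurable_set1.
- apply/seteqP; split => z //= [].
  rewrite in_itv /= => /andP[z0 zx] [] zE; rewrite zE ltxx in z0 zx => //.
Qed.

Lemma bigsetU_mem (I : eqType) (T : Type) (s : seq I) (p : pred I) (F : I -> set T) z :
  (\big[setU/set0]_(i <- s | p i) F i) z <-> exists i, [/\ i \in s, p i & F i z].
Proof.
elim: s => [|j s IH]; first by rewrite big_nil; split => // -[i []].
rewrite big_cons; case: ifP => pj.
  split.
    case=> [Fj|/IH [i [iS pi Fi]]]; first by exists j; rewrite mem_head.
    by exists i; rewrite in_cons iS orbT.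
  move=> [i [+ pi Fi]]; rewrite in_cons => /orP[/eqP ij|iS]; first by left; rewrite -ij.
  by right; apply/IH; exists i.
rewrite IH; split => -[i [iS pi Fi]]; exists i => //; split => //.
  by rewrite in_cons iS orbT.
move: iS; rewrite in_cons => /orP[/eqP ij|//]; by rewrite ij pj in pi.
Qed.

Lemma measure_bigsetU_le d (T : measurableType d) (R : realType)
  (mu : {measure set T -> \bar R}) (I : Type) (s : seq I) (p : pred I) (F : I -> set T) :
  (forall i, measurable (F i)) ->
  measurable (\big[setU/set0]_(i <- s | p i) F i) /\
  (mu (\big[setU/set0]_(i <- s | p i) F i) <= \sum_(i <- s | p i) mu (F i))%E.
Proof.
move=> mF; elim: s => [|j s [IH1 IH2]]; first by rewrite !big_nil measure0.
rewrite !big_cons; case: ifP => // pj; split; first exact: measurableU.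
apply: le_trans (measureU2 _ _ _) _ => //.
exact: leeD.
Qed.

Lemma final_num (R : realType) (q : R) k : 0 < q -> 4 * q <= 1 ->
  (q ^+ k)^-1 * (2 * q) ^+ (2 * k.+1) <= q.
Proof.
move=> q0 q4.
have -> : (2 * q) ^+ (2 * k.+1) = (4 * q) ^+ k.+1 * q * q ^+ k.
  rewrite exprM.
  have -> : (2 * q) ^+ 2 = (4 * q) * q by rewrite expr2; ring.
  by rewrite exprMn (exprS q) mulrA.
rewrite mulrC -!mulrA mulfV ?mulr1; last by rewrite expf_neq0 // gt_eqF.
rewrite -[leRHS]mul1r; apply: ler_wpM2r; first exact: ltW.
apply: exprn_ile1 => //; apply: mulr_ge0 => //; exact: ltW.
Qed.

Theorem proposition3p3 (R : realType) :
  exists lambda C : R, 0 < lambda /\ 0 < C /\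
  forall (t : nat) (w : 'I_t -> R) (l : nat),
    (1 <= t)%N ->
    (forall i, 0 < w i) ->
    (1 <= l <= t)%N ->
    (forall i, w i <= (\sum_(j < t) w j) / (2 * l%:R)) ->
    forall (d : measure_display) (T : measurableType d) (P : probability T R)
           (X : 'I_t -> {RV P >-> R}),
    mutually_independent X ->
    (forall i, is_exponential1 (X i)) ->
    forall c : R, 1 / 2 <= c ->
      (P [set om | (kth_largest (fun i => w i / X i om) l
                     <= (\sum_(j < t) w j) / (c * l%:R))%R]
        <= (lambda * expR (- (C * c)))%:E)%E.
Proof.
exists (expR 2), (1/2); split; first exact: expR_gt0.
split; first by rewrite divr_gt0.
move=> t w l t1 w0 /andP[l1 lt] wle d T P X indep expo c c12.
set W := \sum_(j < t) w j.
have W0 : 0 < W.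
  rewrite /W (bigD1 (Ordinal t1)) //=; apply: (lt_le_trans (w0 (Ordinal t1))).
  by rewrite lerDl; apply: sumr_ge0 => i _; exact: ltW.
have c0 : 0 < c by lra.
have l0 : 0 < l%:R :> R by rewrite ltr0n.
set a := W / (c * l%:R).
have a0 : 0 < a by rewrite divr_gt0 // mulr_gt0.
set x := fun i => w i / a.
have x0 : forall i, 0 < x i by move=> i; rewrite divr_gt0.
have key : forall om i, (a < w i / X i om) = (X i om \in `]0, x i[).
  move=> om i; rewrite in_itv /=.
  case: (ltP 0 (X i om)) => h /=.
    by rewrite ltr_pdivlMr // mulrC -ltr_pdivlMr.
  apply/negbTE; rewrite -leNgt; apply: (le_trans _ (ltW a0)).
  by apply: mulr_ge0_le0; [exact: ltW | rewrite invr_le0].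
pose B (f : {ffun 'I_t -> bool}) i : set R :=
  if f i then `]0, x i[%classic else ~` `]0, x i[%classic.
have mB : forall f i, measurable (B f i).
  move=> f i; rewrite /B; case: (f i); last apply: measurableC; exact: measurable_itv.
pose E (f : {ffun 'I_t -> bool}) := \bigcap_(i in [set: 'I_t]) (X i @^-1` B f i).
have mE : forall f, measurable (E f).
  move=> f; apply: fin_bigcap_measurable; first exact: finite_finset.
  by move=> i _; apply: measurable_funPTI.
have seteq : [set om | (kth_largest (fun i : 'I_t => w i / X i om) l <= a)%R] =
   \big[setU/set0]_(f <- index_enum {ffun 'I_t -> bool} | (count f (enum 'I_t) <= l.-1)%N) E f.
  apply/seteqP; split => om /=.
    rewrite kth_count ?l1 // => hc; apply/bigsetU_mem.
    exists [ffun i => (a < w i / X i om)]; split.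
    - exact: mem_index_enum.
    - by rewrite (eq_count (a2 := fun i => (a < w i / X i om)%R)) // => i; rewrite ffunE.
    - move=> i _ /=; rewrite /B ffunE key; case: ifP => h //=.
      by apply/negP; rewrite h.
  move=> /bigsetU_mem [f [_ hc hE]].
  rewrite kth_count ?l1 //; rewrite (eq_count (a2 := f)) // => i.
  have := hE i I; rewrite /B /= key; case: (f i) => //=.
  by move/negP/negbTE.
pose e i := expR (- x i).
have PE : forall f, P (E f) = (\prod_(i < t) (if f i then 1 - e i else e i))%:E.
  move=> f; rewrite /E indep //; rewrite -prodEFin; apply: eq_bigr => i _.
  have hi : P (X i @^-1` `]0, x i[%classic) = (1 - e i)%:E.
    have := expo i _ (measurable_itv `]0, x i[).
    by rewrite expo_itv // => <-.
  rewrite /B; case: (f i) => //.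
  rewrite -preimage_setC probability_setC ?hi; last exact: measurable_funPTI.
  by rewrite -EFinB; congr EFin; ring.
rewrite seteq.
have [mU hU] := measure_bigsetU_le _ _ _ P _
   (index_enum {ffun 'I_t -> bool}) (fun f => (count f (enum 'I_t) <= l.-1)%N) _ mE.
have e2 : 4 <= expR 2 :> R.
  have h1 := expR_ge1Dx (1:R).
  rewrite (_ : 2 = 1 + 1 :> R) // expRD.
  have : 2 <= expR 1 :> R by lra.
  move=> h2; nra.
set q := expR (- (c / 2)).
have q0 : 0 < q by exact: expR_gt0.
have ge0e : forall i, 0 <= e i <= 1.
  by move=> i; rewrite expR_ge0 /= expR_le1 oppr_le0 ltW.
case: (lerP c 4) => hc4.
  apply: le_trans (probability_le1 _ mU) _.
  rewrite lee_fin -expRD; apply: le_trans (expR_ge1Dx _); lra.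
apply: le_trans hU _.
rewrite (eq_bigr _ (fun f _ => PE f)) sumEFin lee_fin.
apply: le_trans (alg_bound _ _ l.-1 (fun i b => if b then 1 - e i else e i) q _ _) _.
- move=> i [] /=; have := ge0e i; lra.
- by rewrite q0 /= expR_le1; lra.
have q1 : q < 1 by rewrite /q expR_lt1; lra.
set m := c / 2.
have m0 : 0 < m by rewrite /m; lra.
set U := (1 - q) * expR (- m) + q.
have U0 : 0 < U by rewrite /U addr_gt0 // mulr_gt0 ?expR_gt0 // subr_gt0.
pose th i := x i / m.
have th01 : forall i, 0 <= th i <= 1.
  move=> i; rewrite /th divr_ge0 ?(ltW (x0 i)) ?(ltW m0) //=.
  rewrite ler_pdivrMr // mul1r /x /m /a.
  have := wle i; rewrite -/W ler_pdivlMr ?mulr_gt0 // => hw.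
  rewrite invf_div mulrA ler_pdivrMr //.
  nra.
have sumth : \sum_(i < t) th i = (2 * l)%N%:R.
  rewrite /th /x -mulr_suml -mulr_suml -/W /a /m natrM; field.
  by rewrite !gt_eqF.
have hprod : \prod_(i < t) (e i + q * (1 - e i)) <= U ^+ (2 * l).
  apply: le_trans (_ : \prod_(i < t) expR (th i * ln U) <= _).
    apply: ler_prod => i _; apply/andP; split.
      have := ge0e i; have := q0; have := q1; nra.
    have [h0 h1] := andP (th01 i).
    have := holder_step _ (1 - q) q m (th i) _ q0 _ h0 h1.
    rewrite /th divfK ?gt_eqF // -/(e i) => h.
    rewrite (_ : e i + q * (1 - e i) = (1 - q) * e i + q); last by ring.
    by apply: h; [lra | ring].
  by rewrite -expR_sum -mulr_suml sumth expRM_natl lnK // posrE.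
have U2 : U <= 2 * q.
  rewrite /U (_ : expR (- m) = q) //.
  have := q0; have := q1; nra.
have q4 : 4 * q <= 1.
  have : q <= expR (- 2) by rewrite /q ler_expR; lra.
  rewrite expRN => hq.
  have := expR_gt0 (2:R) => hp.
  rewrite -(ler_pM2r hp) mul1r; apply: le_trans e2.
  apply: le_trans (_ : 4 * ((expR 2)^-1 * expR 2) <= _).
    rewrite -mulrA; apply: ler_wpM2l => //; apply: ler_wpM2r => //; exact: ltW.
  by rewrite mulVf ?gt_eqF // mulr1.
apply: le_trans (_ : (q ^+ l.-1)^-1 * (2 * q) ^+ (2 * l) <= _).
  apply: ler_wpM2l; first by rewrite invr_ge0 exprn_ge0 // ltW.
  apply: le_trans hprod _; apply: lerXn2r; rewrite ?nnegrE ?(ltW U0) //.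
  by rewrite mulr_ge0 // ltW.
apply: le_trans (_ : q <= _).
  by have := final_num _ _ l.-1 q0 q4; rewrite prednK.
rewrite (_ : - (1 / 2 * c) = - (c / 2)); last by ring.
rewrite -/q; have := q0; nra.
Qed.
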